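(* Let $m\ge1$ and work in $\Lambda^{\pm}_m=\mathbb Z[x_1^{\pm1},\dots,x_m^{\pm1}]^{S_m}$. Then: (1) for every $k\in\mathbb Z$, $H_k=h_k-h_k^{(\infty)}$; equivalently $H_k=h_k$ for $k\ge0$, $H_k=0$ for $-m<k<0$, and $H_k=-h^{(\infty)}_k$ for $k\le -m$; (2) for every $k\in\mathbb Z$, $H_k(x_1,\dots,x_m)-x_1H_{k-1}(x_1,\dots,x_m)=H_k(x_2,\dots,x_m)$, where the right-hand side is the corresponding element defined for the $m-1$ variables $x_2,\dots,x_m$; (3) if $m=1$, then $H_k(x_1)-x_1H_{k-1}(x_1)=0$ for every $k\in\mathbb Z$.
   Context: For a sequence of integers $\lambda=(\lambda_1,\dots,\lambda_m)$ define $E_\lambda$ by $E_\lambda(x)\prod_{i<j}(x_i-x_j)=\sum_{\sigma\in S_m}\mathrm{sgn}(\sigma)\sigma(x_1^{\lambda_1+m-1}x_2^{\lambda_2+m-2}\cdots x_m^{\lambda_m})$, and set $H_k=E_{(k,0,\dots,0)}$ for $k\in\mathbb Z$. Define $h_k$ and $h_k^{(\infty)}$ by the expansions of $1/\prod_{i=1}^m(1-x_it)$ at $t=0$ and $t=\infty$: $\frac{1}{\prod_i(1-x_it)}=\sum_{k\ge0}h_kt^k=\sum_{k\le -m}h^{(\infty)}_kt^k$, with $h_k=0$ for $k<0$ and $h_k^{(\infty)}=0$ for $k>-m$. *)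

(* Defs.v *)
From HB Require Import structures.
From mathcomp Require Import all_boot all_order all_algebra all_fingroup.
From mathcomp Require Import mpoly.
Set Implicit Arguments. Unset Strict Implicit. Unset Printing Implicit Defensive.
Import Order.TTheory GRing.Theory Num.Theory.
Local Open Scope ring_scope.

(* All objects live in a field K, with variables x : 'I_m -> K.
   The main theorem instantiates K with the fraction field of Z[x_1..x_m]
   (into which Z[x^{+-1}]^{S_m} embeds injectively). *)

Section Defs.
Variable K : fieldType.

Definition vdm (m : nat) (x : 'I_m -> K) : K :=
  \prod_(i < m) \prod_(j < m | (i < j)%N) (x i - x j).

Definition alternant (m : nat) (lam : 'I_m -> int) (x : 'I_m -> K) : K :=
  \sum_(s : 'S_m) (-1) ^+ s *
     \prod_(i < m) x (s i) ^ (lam i + ((m.-1 - i)%N)%:Z).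

Definition Elam (m : nat) (lam : 'I_m -> int) (x : 'I_m -> K) : K :=
  alternant lam x / vdm x.

Definition Hk (m : nat) (x : 'I_m -> K) (k : int) : K :=
  Elam (fun i : 'I_m => if val i == 0%N then k else 0) x.

(* Formal power series division: coefficients c_0, c_1, ... of P/Q at 0
   (Q`_0 <> 0), given by  c_n = (P_n - sum_{i=1}^n Q_i c_{n-i}) / Q_0. *)
Fixpoint series_seq (P Q : {poly K}) (n : nat) : seq K :=
  match n with
  | 0 => [:: P`_0 / Q`_0]
  | n'.+1 => let c := series_seq P Q n' in
      rcons c ((P`_n - \sum_(1 <= i < n.+1) Q`_i * c`_(n - i)) / Q`_0)
  end.

Definition series_coef (P Q : {poly K}) (n : nat) : K := (series_seq P Q n)`_n.

(* h_k : coefficient of t^k in the expansion of 1/prod_i (1 - x_i t) at t = 0 *)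
Definition hk (m : nat) (x : 'I_m -> K) (k : int) : K :=
  if (0 <= k) then series_coef 1 (\prod_(i < m) (1 - x i *: 'X)) `|k|%N
  else 0.

(* h^(oo)_k : coefficient of t^k in the expansion of 1/prod_i (1 - x_i t)
   at t = oo.  With s = 1/t, 1/prod_i (1 - x_i t) = s^m / prod_i (s - x_i),
   expanded at s = 0; the coefficient of t^k is that of s^(-k). *)
Definition hinf (m : nat) (x : 'I_m -> K) (k : int) : K :=
  if (k <= 0) then
    series_coef 'X^m (\prod_(i < m) ('X - (x i)%:P)) `|k|%N
  else 0.

End Defs.

Definition Kvar (m : nat) := {fraction {mpoly int[m]}}.
Definition xvar (m : nat) (i : 'I_m) : Kvar m := @FracField.tofrac _ 'X_i.

(* Main.v *)
Require Import Defs.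
From HB Require Import structures.
From mathcomp Require Import all_boot all_order all_algebra all_fingroup.
From mathcomp Require Import mpoly.
From mathcomp Require Import zify ring.
Set Implicit Arguments. Unset Strict Implicit. Unset Printing Implicit Defensive.
Import Order.TTheory GRing.Theory Num.Theory.
Local Open Scope ring_scope.

Section Gen.
Variable K : fieldType.

Lemma series_char (P Q : {poly K}) (a : nat -> K) : Q`_0 != 0 ->
  (forall n, \sum_(i < n.+1) Q`_i * a (n - i)%N = P`_n) ->
  forall n, series_coef P Q n = a n.
Proof.
move=> Q0 H.
have E : forall n, series_seq P Q n = mkseq a n.+1.
  elim=> [|n IH] /=.
    have := H 0%N; rewrite big_ord1 subnn => <-.
    by rewrite /mkseq /= mulrC mulKf.
  rewrite IH [mkseq a n.+2]mkseqS; congr (rcons _ _).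
  have := H n.+1; rewrite big_ord_recl subn0 => <-.
  rewrite big_add1 /= big_mkord.
  under [X in _ - X]eq_bigr => i _.
    rewrite nth_mkseq; last by rewrite ltn_subLR // addSn ltnS leq_addl.
    over.
  rewrite addrK mulrC mulKf //.
move=> n; by rewrite /series_coef E nth_mkseq.
Qed.

Definition dd m (x : 'I_m -> K) (j : 'I_m) : K :=
  (\prod_(l | l != j) (x j - x l))^-1.
Definition ff m (x : 'I_m -> K) (k : int) : K :=
  \sum_j x j ^ (k + (m.-1)%:Z) * dd x j.

Lemma prod_neq0 m (x : 'I_m -> K) j : injective x ->
  \prod_(l | l != j) (x j - x l) != 0.
Proof.
move=> xi; apply/prodf_neq0 => l lj; rewrite subr_eq0.
by apply/negP => /eqP /xi E; rewrite E eqxx in lj.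
Qed.

Lemma uniq_sol m (x : 'I_m.+1 -> K) (u : 'I_m.+1 -> K) : injective x ->
  (forall p, (p < m)%N -> \sum_j x j ^+ p * u j = 0) ->
  forall j0, u j0 = (\sum_j x j ^+ m * u j) * dd x j0.
Proof.
move=> xi H j0.
set g := \prod_(l | l != j0) ('X - (x l)%:P).
have sg : size g = m.+1.
  rewrite /g -big_filter size_prod_XsubC; congr _.+1.
  have := cardC1 j0. rewrite cardE /enum_mem card_ord /=.
  by [].
have lc : g`_m = 1.
  have := monicP (monic_prod_XsubC (index_enum 'I_m.+1) (fun l => l != j0) x).
  by rewrite -/g /lead_coef sg.
have E1 : \sum_j g.[x j] * u j = g.[x j0] * u j0.
  rewrite (bigD1 j0) //= big1 ?addr0 // => j nj.
  by rewrite /g horner_prod (bigD1 j) //= hornerXsubC subrr !mul0r.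
have E2 : \sum_j g.[x j] * u j = \sum_j x j ^+ m * u j.
  under eq_bigr => j _ do rewrite (horner_coef_wide _ (eq_leq sg)) big_distrl.
  rewrite exchange_big /= big_ord_recr /= big1 ?add0r.
    by apply: eq_bigr => j _; rewrite lc mul1r.
  move=> i _.
  under eq_bigr => j _ do rewrite -mulrA.
  by rewrite -big_distrr /= H ?mulr0.
have gx : g.[x j0] = \prod_(l | l != j0) (x j0 - x l).
  by rewrite /g horner_prod; apply: eq_bigr => l _; rewrite hornerXsubC.
rewrite -E2 E1 gx /dd mulrC mulrA mulVf ?mul1r //.
exact: prod_neq0.
Qed.

Definition lamk m (k : int) : 'I_m -> int := fun i => if val i == 0%N then k else 0.
Definition Mx m (lam : 'I_m -> int) (x : 'I_m -> K) : 'M[K]_m :=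
  \matrix_(i, j) x j ^ (lam i + ((m.-1 - i)%N)%:Z).

Lemma alt_det m (lam : 'I_m -> int) (x : 'I_m -> K) : alternant lam x = \det (Mx lam x).
Proof.
rewrite /alternant /(\det _); apply: eq_bigr => s _; congr (_ * _).
by apply: eq_bigr => i _; rewrite mxE.
Qed.

Lemma alt_ext m (lam lam' : 'I_m -> int) (x : 'I_m -> K) : lam =1 lam' ->
  alternant lam x = alternant lam' x.
Proof.
move=> e; rewrite /alternant; apply: eq_bigr => s _; congr (_ * _).
by apply: eq_bigr => i _; rewrite e.
Qed.

Definition Cof m (x : 'I_m.+1 -> K) j := cofactor (Mx (@lamk m.+1 0) x) ord0 j.

Lemma alt_cof m (x : 'I_m.+1 -> K) k :
  alternant (@lamk m.+1 k) x = \sum_j x j ^ (k + m%:Z) * Cof x j.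
Proof.
rewrite alt_det (expand_det_row _ ord0); apply: eq_bigr => j _.
congr (_ * _); first by rewrite mxE /= subn0.
rewrite /Cof /cofactor; congr (_ * \det _); apply/matrixP => i l.
by rewrite !mxE.
Qed.

Lemma alt_zero m (x : 'I_m.+1 -> K) k : - (m.+1)%:Z < k -> k < 0 ->
  alternant (@lamk m.+1 k) x = 0.
Proof.
move=> h1 h2.
have hk : (`|k| < m.+1)%N by lia.
rewrite alt_det (@determinant_alternate _ _ _ ord0 (Ordinal hk)).
- by [].
- by rewrite -val_eqE /=; lia.
move=> j; rewrite !mxE /lamk /=.
have -> : (absz k == 0%N) = false by lia.
congr (_ ^ _); rewrite subn0; lia.
Qed.

Lemma cof_sol m (x : 'I_m.+1 -> K) : injective x ->
  forall j, Cof x j = alternant (@lamk m.+1 0) x * dd x j.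
Proof.
move=> xi j; rewrite (uniq_sol (u := Cof x) xi _ j).
  congr (_ * _); rewrite alt_cof; apply: eq_bigr => i _; by rewrite add0r.
move=> p hp.
transitivity (\sum_j x j ^ (p%:Z - m%:Z + m%:Z) * Cof x j).
  by apply: eq_bigr => i _; rewrite subrK.
rewrite -alt_cof; apply: alt_zero; lia.
Qed.

Lemma vdm_alt m (x : 'I_m -> K) : injective x -> alternant (fun _ => 0) x = vdm x.
Proof.
elim: m x => [|m IH] x xi.
  by rewrite alt_det det_mx00 /vdm big_ord0.
have C0 := cof_sol xi ord0.
have A0 : alternant (@lamk m.+1 0) x = alternant (fun _ => 0) x.
  by apply: alt_ext => i; rewrite /lamk if_same.
have C0' : Cof x ord0 = vdm (fun i => x (lift ord0 i)).
  rewrite -IH; last by move=> a b /xi /lift_inj.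
  rewrite /Cof /cofactor /= expr0 mul1r alt_det; congr (\det _).
  apply/matrixP => i j; rewrite !mxE /=.
  have -> : @lamk m.+1 0 (lift ord0 i) = 0 by rewrite /lamk; case: eqP.
  rewrite /bump leq0n add1n; congr (_ ^ (_ + Posz _)); lia.
have P0 := prod_neq0 ord0 xi.
have V : vdm x = (\prod_(l | l != ord0) (x ord0 - x l)) * vdm (fun i => x (lift ord0 i)).
  rewrite /vdm big_ord_recl; congr (_ * _).
    by apply: eq_bigl => j; rewrite lt0n.
  apply: eq_bigr => i _.
  rewrite big_mkcond big_ord_recl /= mul1r [RHS]big_mkcond; apply: eq_bigr => j _ /=.
  by [].
rewrite V -C0' C0 -A0 /dd. by rewrite mulrC mulfVK.
Qed.

Lemma vdm_neq0 m (x : 'I_m -> K) : injective x -> vdm x != 0.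
Proof.
move=> xi; apply/prodf_neq0 => i _; apply/prodf_neq0 => j ij; rewrite subr_eq0.
apply/negP => /eqP /xi E; by rewrite E ltnn in ij.
Qed.

Lemma HkE m (x : 'I_m.+1 -> K) k : injective x -> Hk x k = ff x k.
Proof.
move=> xi.
have A0 : alternant (@lamk m.+1 0) x = vdm x.
  rewrite -vdm_alt //; by apply: alt_ext => i; rewrite /lamk if_same.
rewrite /Hk /Elam.
have -> : alternant (fun i : 'I_m.+1 => if val i == 0%N then k else 0) x
   = alternant (@lamk m.+1 k) x by [].
rewrite alt_cof /ff mulr_suml; apply: eq_bigr => j _.
rewrite cof_sol // A0 mulrCA mulrC mulKf //; exact: vdm_neq0.
Qed.

Lemma ff_zero m (x : 'I_m.+1 -> K) k : injective x ->
  - (m.+1)%:Z < k -> k < 0 -> ff x k = 0.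
Proof.
move=> xi h1 h2; rewrite -HkE // /Hk /Elam.
have -> : alternant (fun i : 'I_m.+1 => if val i == 0%N then k else 0) x
   = alternant (@lamk m.+1 k) x by [].
by rewrite alt_zero // mul0r.
Qed.

Lemma ff_0 m (x : 'I_m.+1 -> K) : injective x -> ff x 0 = 1.
Proof.
move=> xi; rewrite -HkE // /Hk /Elam.
have -> : alternant (fun i : 'I_m.+1 => if val i == 0%N then 0 else 0) x
   = vdm x by rewrite -vdm_alt //; apply: alt_ext => i; rewrite if_same.
by rewrite mulfV // vdm_neq0.
Qed.

Lemma mulX1 (y : K) e : y != 0 -> y * y ^ (e - 1) = y ^ e.
Proof.
move=> y0; rewrite -{1}(expr1z y) -expfzDr //; congr (_ ^ _).
by rewrite addrC subrK.
Qed.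

Lemma dd_lift m (x : 'I_m.+1 -> K) i :
  dd x (lift ord0 i) = (x (lift ord0 i) - x ord0)^-1 * dd (fun l => x (lift ord0 l)) i.
Proof.
rewrite /dd big_mkcond big_ord_recl /= -invfM; congr (_^-1); congr (_ * _).
rewrite [RHS]big_mkcond; apply: eq_bigr => l _.
by rewrite (inj_eq lift_inj).
Qed.

Lemma ff_rec m (x : 'I_m.+1 -> K) k : injective x -> (forall i, x i != 0) ->
  ff x k - x ord0 * ff x (k - 1) = ff (fun i => x (lift ord0 i)) k.
Proof.
move=> xi x0.
rewrite /ff !big_ord_recl /= mulrDr opprD addrACA mulrA.
have -> : k - 1 + m%:Z = (k + m%:Z) - 1 by rewrite addrAC.
rewrite mulX1 // subrr add0r mulr_sumr -sumrB; apply: eq_bigr => i _.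
rewrite -(@mulX1 (x (lift ord0 i)) (k + m%:Z)) // dd_lift.
have -> : k + m%:Z - 1 = k + (m.-1)%:Z.
  have hm : (0 < m)%N := leq_ltn_trans (leq0n i) (ltn_ord i).
  lia.
have h : x (lift ord0 i) - x ord0 != 0 by rewrite subr_eq0; apply/negP => /eqP /xi.
field; exact: h.
Qed.

Lemma sizeQ m (c : 'I_m -> K) : (size (\prod_(i < m) (1 - c i *: 'X) : {poly K})%R <= m.+1)%N.
Proof.
elim: m c => [|m IH] c; first by rewrite big_ord0 size_poly1.
rewrite big_ord_recr /=; apply: leq_trans (size_polyMleq _ _) _.
have h2 : (size (1 - c ord_max *: 'X : {poly K})%R <= 2)%N.
  apply: leq_trans (size_polyD _ _) _; rewrite geq_max size_poly1 size_polyN.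
  by apply: leq_trans (size_scale_leq _ _) _; rewrite size_polyX.
move: (leq_add (IH (fun i => c (widen_ord (leqnSn m) i))) h2).
case: (_ + _)%N => // a; by rewrite addn2.
Qed.

Lemma series_hk m (x : 'I_m.+1 -> K) : injective x -> (forall i, x i != 0) ->
  forall n, series_coef 1 (\prod_(i < m.+1) (1 - x i *: 'X)) n = ff x n%:Z.
Proof.
move=> xi x0; set Q := \prod_(i < m.+1) (1 - x i *: 'X).
have sQ : (size Q <= m.+2)%N := sizeQ x.
have Q0 : Q`_0 = 1.
  rewrite -horner_coef0 /Q horner_prod big1 // => i _.
  by rewrite !hornerE subr0.
have Qroot : forall j, Q.[(x j)^-1] = 0.
  move=> j; rewrite /Q horner_prod (bigD1 j) //= !hornerE mulfV // subrr.
  by rewrite mul0r.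
apply: series_char; first by rewrite Q0 oner_neq0.
case=> [|n].
  by rewrite big_ord1 Q0 subnn mul1r ff_0 // coef1.
rewrite coef1 /=.
set F := fun i : nat => Q`_i * ff x (n.+1%:Z - i%:Z).
have Fz : forall i, (n.+2 <= i)%N -> F i = 0.
  move=> i hi; rewrite /F; case: (leqP m.+2 i) => him.
    by rewrite nth_default ?mul0r // (leq_trans sQ).
  by rewrite ff_zero ?mulr0 //; lia.
have Fz2 : forall i, (m.+2 <= i)%N -> F i = 0.
  by move=> i hi; rewrite /F nth_default ?mul0r // (leq_trans sQ).
transitivity (\sum_(i < n.+2) F i).
  by apply: eq_bigr => i _; rewrite /F subzn // -ltnS ltn_ord.
have e1 : \sum_(i < n.+2) F i = \sum_(i < n.+2 + m.+2) F i.
  rewrite (big_ord_widen (n.+2 + m.+2) F) ?leq_addr // big_mkcond.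
  apply: eq_bigr => i _; case: ifP => // /negbT; rewrite -leqNgt => hi.
  by rewrite Fz.
have e2 : \sum_(i < m.+2) F i = \sum_(i < n.+2 + m.+2) F i.
  rewrite (big_ord_widen (n.+2 + m.+2) F) ?leq_addl // big_mkcond.
  apply: eq_bigr => i _; case: ifP => // /negbT; rewrite -leqNgt => hi.
  by rewrite Fz2.
rewrite e1 -e2 /F /ff.
under eq_bigr do rewrite big_distrr.
rewrite exchange_big /=; apply: big1 => j _.
transitivity (\sum_(i < m.+2) (x j ^ (n%:Z) * x j ^ (m.+1)%:Z * dd x j) * (Q`_i * (x j)^-1 ^+ i)).
  apply: eq_bigr => i _.
  rewrite -[(x j)^-1 ^+ i]/((x j)^-1 ^ (Posz i)) exprz_inv.
  rewrite [RHS]mulrC -!mulrA; congr (_ * _).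
  rewrite !mulrA -!expfzDr //; congr (x j ^ _ * _); lia.
by rewrite -big_distrr /= -(horner_coef_wide _ sQ) Qroot mulr0.
Qed.

Lemma series_hinf m (x : 'I_m.+1 -> K) : injective x -> (forall i, x i != 0) ->
  forall n, series_coef 'X^(m.+1) (\prod_(i < m.+1) ('X - (x i)%:P)) n
            = (n == 0%N)%:R - ff x (- n%:Z).
Proof.
move=> xi x0; set Q := \prod_(i < m.+1) ('X - (x i)%:P).
have sQ : size Q = m.+2.
  rewrite /Q size_prod_XsubC; congr _.+1.
  have := card_ord m.+1; rewrite cardE /enum_mem => h; rewrite -[RHS]h.
  apply: congr1; rewrite -[LHS]filter_predT; by apply: eq_filter.
have lc : Q`_m.+1 = 1.
  have := monicP (monic_prod_XsubC (index_enum 'I_m.+1) predT x).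
  by rewrite -/Q /lead_coef sQ.
have Q0 : Q`_0 != 0.
  rewrite -horner_coef0 /Q horner_prod; apply/prodf_neq0 => i _.
  by rewrite hornerXsubC sub0r oppr_eq0.
have Qroot : forall j, Q.[x j] = 0.
  move=> j; rewrite /Q horner_prod (bigD1 j) //= hornerXsubC subrr.
  by rewrite mul0r.
apply: series_char => // n.
rewrite coefXn.
under eq_bigr => i _ do rewrite mulrBr.
rewrite sumrB.
have S1 : \sum_(i < n.+1) Q`_i * ((n - i)%N == 0%N)%:R = Q`_n.
  rewrite big_ord_recr /= subnn mulr1 big1 ?add0r // => i _.
  by rewrite /= subn_eq0 leqNgt ltn_ord mulr0.
rewrite S1.
have S2 : \sum_(i < n.+1) Q`_i * ff x (- ((n - i)%N)%:Z)
        = \sum_(i < n.+1) Q`_i * ff x (i%:Z - n%:Z).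
  apply: eq_bigr => i _.
  have -> : Posz (n - i)%N = n%:Z - i%:Z by rewrite subzn // -ltnS.
  by rewrite opprB.
rewrite S2.
case: (ltnP n m.+1) => hn.
  rewrite big_ord_recr /= subrr ff_0 // mulr1 big1 ?add0r ?subrr ?ltn_eqF //.
  move=> i _; have := ltn_ord i; move=> hi.
  by rewrite ff_zero ?mulr0 //=; lia.
have E : \sum_(i < n.+1) Q`_i * ff x (i%:Z - n%:Z)
       = \sum_(i < m.+2) Q`_i * ff x (i%:Z - n%:Z).
  symmetry; rewrite (big_ord_widen n.+1 (fun i : nat => Q`_i * ff x (i%:Z - n%:Z))) //.
  rewrite [RHS](bigID (fun i : 'I_n.+1 => (i < m.+2)%N)) /=.
  rewrite [X in _ = _ + X]big1 ?addr0 //.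
  move=> i; rewrite -leqNgt => hi.
  by rewrite nth_default ?mul0r // sQ.
rewrite E.
have -> : \sum_(i < m.+2) Q`_i * ff x (i%:Z - n%:Z) = 0.
  rewrite /ff.
  under eq_bigr do rewrite big_distrr.
  rewrite exchange_big /=; apply: big1 => j _.
  transitivity (\sum_(i < m.+2) (x j ^ (m%:Z - n%:Z) * dd x j) * (Q`_i * x j ^+ i)).
    apply: eq_bigr => i _.
    rewrite -[x j ^+ i]/(x j ^ (Posz i)).
    rewrite [RHS]mulrC -!mulrA; congr (_ * _).
    rewrite !mulrA -!expfzDr //; congr (x j ^ _ * _); lia.
  by rewrite -big_distrr /= -(horner_coef_wide _ (eq_leq sQ)) Qroot mulr0.
rewrite subr0; case: (eqVneq n m.+1) => [->|ne]; first by rewrite lc.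
by rewrite nth_default // sQ; lia.
Qed.

Lemma hkE m (x : 'I_m.+1 -> K) k : injective x -> (forall i, x i != 0) ->
  hk x k = if 0 <= k then ff x k else 0.
Proof.
move=> xi x0; rewrite /hk; case: ifP => // hk0.
rewrite series_hk //; congr (ff x _); lia.
Qed.

Lemma hinfE m (x : 'I_m.+1 -> K) k : injective x -> (forall i, x i != 0) ->
  hinf x k = if k < 0 then - ff x k else 0.
Proof.
move=> xi x0; rewrite /hinf; case: (ltrP k 0) => h.
  rewrite ifT; last by lia.
  rewrite series_hinf //.
  have -> : (absz k == 0%N) = false by lia.
  have -> : - (absz k)%:Z = k by lia.
  by rewrite sub0r.
case: ifP => // h2.
have -> : k = 0 by lia.
by rewrite series_hinf //= ff_0 // subrr.
Qed.

Lemma part1 m (x : 'I_m.+1 -> K) : injective x -> (forall i, x i != 0) ->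
  (forall k : int, Hk x k = hk x k - hinf x k) /\
  (forall k : int, 0 <= k -> Hk x k = hk x k) /\
  (forall k : int, - (m.+1)%:Z < k -> k < 0 -> Hk x k = 0) /\
  (forall k : int, k <= - (m.+1)%:Z -> Hk x k = - hinf x k).
Proof.
move=> xi x0; split; last split; last split.
- move=> k; rewrite HkE // hkE // hinfE //.
  case: (ltrP k 0) => h.
    by rewrite sub0r opprK.
  by rewrite subr0.
- by move=> k h; rewrite HkE // hkE // h.
- by move=> k h1 h2; rewrite HkE // ff_zero.
- move=> k h; rewrite HkE // hinfE // ifT ?opprK //; lia.
Qed.

Lemma part2 m (x : 'I_m.+1 -> K) : injective x -> (forall i, x i != 0) ->
  (0 < m)%N -> forall k : int,
  Hk x k - x ord0 * Hk x (k - 1) = Hk (fun i : 'I_m => x (lift ord0 i)) k.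
Proof.
case: m x => [|m] x xi x0 // _ k.
rewrite !HkE //; first exact: ff_rec.
by move=> a b /xi /lift_inj.
Qed.

Lemma part3 (x : 'I_1 -> K) : injective x -> (forall i, x i != 0) ->
  forall k : int, Hk x k - x ord0 * Hk x (k - 1) = 0.
Proof.
move=> xi x0 k; rewrite !HkE // ff_rec //.
by rewrite /ff big_ord0.
Qed.
End Gen.

Lemma xvar_inj m : injective (@xvar m).
Proof.
move=> i j /eqP; rewrite /xvar tofrac_eq => /eqP E.
have := congr1 (fun p : {mpoly int[m]} => p@_U_(i)) E.
rewrite /= !mcoeffXU eqxx => h.
by move: h; case: eqP => // _ /eqP; rewrite oner_eq0.
Qed.

Lemma xvar_neq0 m i : @xvar m i != 0.
Proof.
rewrite /xvar tofrac_eq0; apply/negP => /eqP E.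
have := congr1 (fun p : {mpoly int[m]} => p@_U_(i)) E.
by rewrite /= mcoeffXU eqxx mcoeff0 => /eqP; rewrite oner_eq0.
Qed.

Unset Implicit Arguments.

Theorem mainTheorem2 (n : nat) :
  (* m = n.+1 >= 1 variables x_1 = xvar ord0, ..., x_m *)
  let x := @xvar n.+1 in
  (* (1) *)
  (forall k : int, Hk x k = hk x k - hinf x k) /\
  (forall k : int, 0 <= k -> Hk x k = hk x k) /\
  (forall k : int, - (n.+1)%:Z < k -> k < 0 -> Hk x k = 0) /\
  (forall k : int, k <= - (n.+1)%:Z -> Hk x k = - hinf x k) /\
  (* (2) for m >= 2: H_k(x_1..x_m) - x_1 H_{k-1}(x_1..x_m) = H_k(x_2..x_m) *)
  ((0 < n)%N -> forall k : int,
      Hk x k - x ord0 * Hk x (k - 1) = Hk (fun i : 'I_n => x (lift ord0 i)) k) /\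
  (* (3) m = 1 *)
  (n = 0%N -> forall k : int, Hk x k - x ord0 * Hk x (k - 1) = 0).
Proof.
move=> x.
have xi : injective x := @xvar_inj n.+1.
have x0 : forall i, x i != 0 := @xvar_neq0 n.+1.
have [h1 [h2 [h3 h4]]] := part1 xi x0.
do 4 (split; first by []).
split; first exact: part2.
move=> hn; move: x xi x0 {h1 h2 h3 h4}; rewrite hn => x xi x0.
exact: part3.
Qed.
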